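(* Let $f:[0,1]\times[0,1]\to\mathbb{R}$ be convex on the coordinates. Then \begin{align*} &\frac{1}{4}\int_0^1 \Big[f\Big(x,\tfrac{1}{4}\Big) + f\Big(x,\tfrac{3}{4}\Big)\Big]dx + \frac{1}{4}\int_0^1 \Big[f\Big(\tfrac{1}{4},y\Big) + f\Big(\tfrac{3}{4},y\Big)\Big]dy\\ &\leq \int_0^1\int_0^1 f(x, y)\,dx\,dy\\ &\leq \frac{1}{8}\int_0^1 \big[f(x,0) + f(x,1)\big]dx + \frac{1}{8}\int_0^1 \big[f(0,y) + f(1,y)\big]dy +\frac{1}{4}\int_0^1 f\Big(x,\tfrac{1}{2}\Big)dx+\frac{1}{4}\int_0^1 f\Big(\tfrac{1}{2},y\Big)dy. \end{align*}
   Context: A function $f:[a,b]\times[c,d]\to\mathbb{R}$ is called convex on the coordinates if for every $y\in[c,d]$ the partial map $u\mapsto f(u,y)$ is convex on $[a,b]$, and for every $x\in[a,b]$ the partial map $v\mapsto f(x,v)$ is convex on $[c,d]$. *)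

(* Defs.v *)
From Stdlib Require Import Reals Lra ClassicalEpsilon.
Open Scope R_scope.

Definition convex_on (a b : R) (g : R -> R) : Prop :=
  forall u v t, a <= u <= b -> a <= v <= b -> 0 <= t <= 1 ->
    g (t * u + (1 - t) * v) <= t * g u + (1 - t) * g v.

Definition convex_on_coordinates (a b c d : R) (f : R -> R -> R) : Prop :=
  (forall y, c <= y <= d -> convex_on a b (fun u => f u y)) /\
  (forall x, a <= x <= b -> convex_on c d (fun v => f x v)).

(* Total Riemann integral over [a,b]: equals RiemannInt pr whenever g is
   Riemann integrable (value independent of the proof pr); an arbitrary
   real otherwise. *)
Definition Rint (g : R -> R) (a b : R) : R :=
  epsilon (inhabits 0)
    (fun l => exists pr : Riemann_integrable g a b, RiemannInt pr = l).

(* Main.v *)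
Require Import Defs.
From Stdlib Require Import Reals.
From Stdlib Require Import Lra Psatz ClassicalEpsilon.
From Coquelicot Require Import Coquelicot.
Open Scope R_scope.

Lemma conv3 a b g u v w : convex_on a b g -> a <= u -> u <= v -> v <= w -> w <= b -> u < w ->
  (w - u) * g v <= (w - v) * g u + (v - u) * g w.
Proof.
  intros Hc H1 H2 H3 H4 H5.
  set (t := (w - v) / (w - u)).
  assert (Ht : 0 <= t <= 1).
  { unfold t; split. unfold Rdiv; apply Rmult_le_pos; [lra| left; apply Rinv_0_lt_compat; lra].
    apply (Rmult_le_reg_r (w-u)); [lra|]. unfold Rdiv; rewrite Rmult_assoc, Rinv_l; lra. }
  assert (Hv : t * u + (1 - t) * w = v). { unfold t; field; lra. }
  pose proof (Hc u w t ltac:(lra) ltac:(lra) Ht) as Hk. rewrite Hv in Hk.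
  assert (E1 : (w - u) * t = w - v) by (unfold t; field; lra).
  assert (E2 : (w - u) * (1 - t) = v - u) by (unfold t; field; lra).
  apply Rmult_le_compat_l with (r := w - u) in Hk; [|lra].
  rewrite Rmult_plus_distr_l, <- !Rmult_assoc, E1, E2 in Hk. exact Hk.
Qed.

Lemma conv_lip a b g x u w : convex_on a b g -> a <= u -> u < x -> x < w -> w <= b ->
  forall y, u <= y <= w ->
  (x - u) * (w - x) * Rabs (g y - g x) <=
  (Rabs (g u - g x) * (w - x) + Rabs (g w - g x) * (x - u)) * Rabs (y - x).
Proof.
  intros Hc H1 H2 H3 H4 y Hy.
  set (A := Rabs (g u - g x)). set (B := Rabs (g w - g x)).
  assert (HA : - A <= g u - g x <= A) by (unfold A; split_Rabs; lra).
  assert (HB : - B <= g w - g x <= B) by (unfold B; split_Rabs; lra).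
  destruct (Rtotal_order y x) as [Hl|[He|Hg]].
  - pose proof (conv3 a b g u y x Hc H1 ltac:(lra) ltac:(lra) ltac:(lra) ltac:(lra)) as C1.
    pose proof (conv3 a b g y x w Hc ltac:(lra) ltac:(lra) ltac:(lra) ltac:(lra) ltac:(lra)) as C2.
    rewrite (Rabs_left (y - x)) by lra.
    assert (P1 : (x - u) * (g y - g x) <= (x - y) * A).
    { assert ((x - y) * (g u - g x) <= (x - y) * A) by (apply Rmult_le_compat_l; lra). lra. }
    assert (P2 : (w - x) * (g y - g x) >= - ((x - y) * B)).
    { assert ((x - y) * (g w - g x) <= (x - y) * B) by (apply Rmult_le_compat_l; lra). lra. }

    assert (HA0 : 0 <= A) by (unfold A; apply Rabs_pos).
    assert (HB0 : 0 <= B) by (unfold B; apply Rabs_pos).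
    assert (Q1 := Rmult_le_compat_l (w - x) _ _ ltac:(lra) P1).
    assert (Q2 := Rmult_le_compat_l (x - u) _ _ ltac:(lra) (Rge_le _ _ P2)).
    assert (0 <= (x - u) * ((x - y) * B)) by (apply Rmult_le_pos; [lra|apply Rmult_le_pos; lra]).
    assert (0 <= (w - x) * ((x - y) * A)) by (apply Rmult_le_pos; [lra|apply Rmult_le_pos; lra]).
    destruct (Rle_dec 0 (g y - g x)).
    + rewrite Rabs_right by lra. lra.
    + rewrite Rabs_left by lra. lra.
  - rewrite He. replace (x - x) with 0 by ring. rewrite Rabs_R0, Rmult_0_r.
    replace (g x - g x) with 0 by ring. rewrite Rabs_R0; lra.
  - pose proof (conv3 a b g u x y Hc H1 ltac:(lra) ltac:(lra) ltac:(lra) ltac:(lra)) as C1.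
    pose proof (conv3 a b g x y w Hc ltac:(lra) ltac:(lra) ltac:(lra) ltac:(lra) ltac:(lra)) as C2.
    rewrite (Rabs_right (y - x)) by lra.
    assert (P1 : (x - u) * (g y - g x) >= - ((y - x) * A)).
    { assert ((y - x) * (g u - g x) <= (y - x) * A) by (apply Rmult_le_compat_l; lra). lra. }
    assert (P2 : (w - x) * (g y - g x) <= (y - x) * B).
    { assert ((y - x) * (g w - g x) <= (y - x) * B) by (apply Rmult_le_compat_l; lra). lra. }
    assert (HA0 : 0 <= A) by (unfold A; apply Rabs_pos).
    assert (HB0 : 0 <= B) by (unfold B; apply Rabs_pos).
    assert (Q1 := Rmult_le_compat_l (w - x) _ _ ltac:(lra) (Rge_le _ _ P1)).
    assert (Q2 := Rmult_le_compat_l (x - u) _ _ ltac:(lra) P2).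
    assert (0 <= (x - u) * ((y - x) * B)) by (apply Rmult_le_pos; [lra|apply Rmult_le_pos; lra]).
    assert (0 <= (w - x) * ((y - x) * A)) by (apply Rmult_le_pos; [lra|apply Rmult_le_pos; lra]).
    destruct (Rle_dec 0 (g y - g x)).
    + rewrite Rabs_right by lra. lra.
    + rewrite Rabs_left by lra. lra.
Qed.

Lemma div_le X Y p q : 0 < p -> 0 < q -> X * q <= Y * p -> X / p <= Y / q.
Proof.
  intros Hp Hq H.
  replace (X / p) with (X * q * / (p * q)) by (field; lra).
  replace (Y / q) with (Y * p * / (p * q)) by (field; lra).
  apply Rmult_le_compat_r; [left; apply Rinv_0_lt_compat; nra | exact H].
Qed.

Lemma interior_eps a b g x : convex_on a b g -> a < x < b ->
  forall eps, 0 < eps -> exists d, 0 < d /\ forall y, Rabs (y - x) < d ->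
    a < y < b /\ Rabs (g y - g x) < eps.
Proof.
  intros Hc Hx eps He.
  set (A := Rabs (g a - g x)). set (B := Rabs (g b - g x)).
  set (P := (x - a) * (b - x)). set (N := A * (b - x) + B * (x - a)).
  assert (HP : 0 < P) by (unfold P; nra).
  assert (HN : 0 <= N).
  { unfold N, A, B. pose proof (Rabs_pos (g a - g x)). pose proof (Rabs_pos (g b - g x)). nra. }
  set (d := Rmin (Rmin (x - a) (b - x)) (eps * P / (N + 1))).
  assert (Hd1 : d <= x - a) by (unfold d; pose proof (Rmin_l (Rmin (x-a) (b-x)) (eps * P / (N + 1))); pose proof (Rmin_l (x-a) (b-x)); lra).
  assert (Hd2 : d <= b - x) by (unfold d; pose proof (Rmin_l (Rmin (x-a) (b-x)) (eps * P / (N + 1))); pose proof (Rmin_r (x-a) (b-x)); lra).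
  assert (Hd3 : d <= eps * P / (N + 1)) by (unfold d; apply Rmin_r).
  assert (Hpos : 0 < eps * P / (N + 1)) by (apply Rdiv_lt_0_compat; nra).
  exists d. split.
  { unfold d. apply Rmin_glb_lt; [apply Rmin_glb_lt|]; lra. }
  intros y Hy.
  assert (Hyr : a < y < b) by (split_Rabs; lra).
  split; [exact Hyr|].
  pose proof (conv_lip a b g x a b Hc (Rle_refl a) (proj1 Hx) (proj2 Hx) (Rle_refl b) y ltac:(lra)) as L.
  fold A B in L. fold P in L. fold N in L.
  assert (H3 : N * Rabs (y - x) <= N * d) by (apply Rmult_le_compat_l; lra).
  assert (H4 : N * d <= N * (eps * P / (N + 1))) by (apply Rmult_le_compat_l; lra).
  assert (H5 : N * (eps * P / (N + 1)) < eps * P).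
  { replace (N * (eps * P / (N + 1))) with (eps * P * (N / (N + 1))) by (field; lra).
    assert (N / (N + 1) < 1) by (apply (Rmult_lt_reg_r (N+1)); [lra|]; unfold Rdiv; rewrite Rmult_assoc, Rinv_l; lra).
    assert (0 < eps * P) by nra. nra. }
  apply (Rmult_lt_reg_l P); [exact HP|]. lra.
Qed.

Lemma left_limit a b g : convex_on a b g -> a < b ->
  exists l, forall eps, 0 < eps -> exists d, 0 < d /\ forall y, a < y < a + d ->
    y < b /\ Rabs (g y - l) < eps.
Proof.
  intros Hc Hab.
  set (c := (a + b) / 2).
  assert (Hcc : a < c < b) by (unfold c; lra).
  clearbody c.
  set (S := fun y => (g c - g y) / (c - y)).
  assert (Smono : forall y y', a < y -> y < y' -> y' < c -> S y <= S y').
  { intros y y' H1 H2 H3. unfold S. apply div_le; try lra.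
    pose proof (conv3 a b g y y' c Hc ltac:(lra) ltac:(lra) ltac:(lra) ltac:(lra) ltac:(lra)). nra. }
  assert (Slow : forall y, a < y < c -> (g c - g a) / (c - a) <= S y).
  { intros y Hy. unfold S. apply div_le; try lra.
    pose proof (conv3 a b g a y c Hc ltac:(lra) ltac:(lra) ltac:(lra) ltac:(lra) ltac:(lra)). nra. }
  set (E := fun z => exists y, a < y < c /\ z = - S y).
  assert (HEb : bound E).
  { exists (- ((g c - g a) / (c - a))). intros z [y [Hy ->]]. pose proof (Slow y Hy). lra. }
  assert (HEn : exists z, E z).
  { exists (- S ((a + c) / 2)). exists ((a + c) / 2). split; [lra | reflexivity]. }
  destruct (completeness E HEb HEn) as [m [Hm1 Hm2]].
  set (sg := - m).
  assert (Hsg1 : forall y, a < y < c -> sg <= S y).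
  { intros y Hy. assert (- S y <= m) by (apply Hm1; exists y; split; [lra|reflexivity]). unfold sg; lra. }
  assert (Hsg2 : forall e, 0 < e -> exists y0, a < y0 < c /\ S y0 < sg + e).
  { intros e He. apply Classical_Prop.NNPP. intro Hn.
    assert (m <= - (sg + e)).
    { apply Hm2. intros z [y [Hy ->]].
      destruct (Rlt_le_dec (S y) (sg + e)) as [Hl|Hl].
      - exfalso; apply Hn; exists y; split; assumption.
      - lra. }
    unfold sg in *; lra. }
  exists (g c - (c - a) * sg).
  intros eps He.
  destruct (Hsg2 (eps / (2 * (c - a)))) as [y0 [Hy0 Hy0']].
  { apply Rdiv_lt_0_compat; lra. }
  set (d := Rmin (y0 - a) (eps / (2 * (Rabs sg + 1)))).
  assert (Hd1 : d <= y0 - a) by apply Rmin_l.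
  assert (Hd2 : d <= eps / (2 * (Rabs sg + 1))) by apply Rmin_r.
  assert (HR : 0 <= Rabs sg) by apply Rabs_pos.
  exists d. split.
  { unfold d. apply Rmin_glb_lt; [lra|]. apply Rdiv_lt_0_compat; lra. }
  intros y Hy. split; [lra|].
  assert (Hy1 : a < y < c) by lra.
  pose proof (Hsg1 y Hy1) as T1.
  assert (T2 : S y <= S y0).
  { destruct (Rlt_le_dec y y0). apply Smono; lra. assert (y = y0) by lra. subst; lra. }
  assert (Eq : g y = g c - (c - y) * S y) by (unfold S; field; lra).
  rewrite Eq.
  replace (g c - (c - y) * S y - (g c - (c - a) * sg)) with (- ((c - y) * (S y - sg)) + (y - a) * sg) by ring.
  assert (K1 : 0 <= (c - y) * (S y - sg) <= (c - a) * (eps / (2 * (c - a)))).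
  { split. apply Rmult_le_pos; lra.
    apply Rmult_le_compat; lra. }
  replace ((c - a) * (eps / (2 * (c - a)))) with (eps / 2) in K1 by (field; lra).
  assert (K2 : Rabs ((y - a) * sg) < eps / 2).
  { rewrite Rabs_mult, Rabs_right by lra.
    assert ((y - a) * Rabs sg <= d * Rabs sg) by (apply Rmult_le_compat_r; lra).
    assert (d * (Rabs sg + 1) <= eps / 2).
    { replace (eps / 2) with (eps / (2 * (Rabs sg + 1)) * (Rabs sg + 1)) by (field; lra).
      apply Rmult_le_compat_r; lra. }
    assert (0 < d) by (unfold d; apply Rmin_glb_lt; [lra|apply Rdiv_lt_0_compat; lra]).
    nra. }
  revert K2. split_Rabs; lra.
Qed.

Lemma refl_convex a b g : convex_on a b g -> convex_on a b (fun x => g (a + b - x)).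
Proof.
  intros Hc u v t Hu Hv Ht. simpl.
  replace (a + b - (t * u + (1 - t) * v)) with (t * (a + b - u) + (1 - t) * (a + b - v)) by ring.
  apply Hc; lra.
Qed.

Lemma right_limit a b g : convex_on a b g -> a < b ->
  exists l, forall eps, 0 < eps -> exists d, 0 < d /\ forall y, b - d < y < b ->
    a < y /\ Rabs (g y - l) < eps.
Proof.
  intros Hc Hab. destruct (left_limit a b _ (refl_convex a b g Hc) Hab) as [l Hl].
  exists l. intros eps He. destruct (Hl eps He) as [d [Hd H]]. exists d; split; auto.
  intros y Hy. destruct (H (a + b - y) ltac:(lra)) as [H1 H2].
  replace (a + b - (a + b - y)) with y in H2 by ring. split; [lra|exact H2].
Qed.

Lemma cont_eps h x : (forall eps, 0 < eps -> exists d, 0 < d /\ forall y, Rabs (y - x) < d -> Rabs (h y - h x) < eps) -> continuity_pt h x.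
Proof.
  intros H eps He. destruct (H eps He) as [d [Hd Hy]]. exists d. split; auto.
  intros y [_ Hy2]. simpl in *. unfold R_dist in *. apply Hy; exact Hy2.
Qed.

Lemma convex_ex_RInt a b g : convex_on a b g -> a < b -> ex_RInt g a b.
Proof.
  intros Hc Hab.
  destruct (left_limit a b g Hc Hab) as [l1 Hl1].
  destruct (right_limit a b g Hc Hab) as [l2 Hl2].
  set (h := fun x => if Rle_dec x a then l1 else if Rle_dec b x then l2 else g x).
  assert (Hh : forall x, a < x < b -> h x = g x).
  { intros x Hx. unfold h. destruct (Rle_dec x a); [lra|]. destruct (Rle_dec b x); [lra|]. reflexivity. }
  apply (ex_RInt_ext h).
  { intros x Hx. rewrite Rmin_left, Rmax_right in Hx by lra. apply Hh; exact Hx. }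
  apply ex_RInt_Reals_1. apply continuity_implies_RiemannInt; [lra|].
  intros x Hx. apply cont_eps. intros eps He.
  destruct (Req_dec x a) as [Ea|Na].
  { subst x. destruct (Hl1 eps He) as [d [Hd H]]. exists d; split; auto.
    intros y Hy. assert (ha : h a = l1) by (unfold h; destruct (Rle_dec a a); [reflexivity|lra]).
    rewrite ha. destruct (Rle_dec y a) as [Hya|Hya].
    - unfold h. destruct (Rle_dec y a); [|lra]. replace (l1 - l1) with 0 by ring. rewrite Rabs_R0; lra.
    - assert (Hy2 : a < y < a + d) by (split_Rabs; lra). destruct (H y Hy2) as [Hyb Hg].
      rewrite Hh by lra. exact Hg. }
  destruct (Req_dec x b) as [Eb|Nb].
  { subst x. destruct (Hl2 eps He) as [d [Hd H]]. exists d; split; auto.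
    intros y Hy. assert (hb : h b = l2) by (unfold h; destruct (Rle_dec b a); [lra|]; destruct (Rle_dec b b); [reflexivity|lra]).
    rewrite hb. destruct (Rle_dec b y) as [Hya|Hya].
    - unfold h. destruct (Rle_dec y a); [lra|]. destruct (Rle_dec b y); [|lra]. replace (l2 - l2) with 0 by ring. rewrite Rabs_R0; lra.
    - assert (Hy2 : b - d < y < b) by (split_Rabs; lra). destruct (H y Hy2) as [Hyb Hg].
      rewrite Hh by lra. exact Hg. }
  destruct (interior_eps a b g x Hc ltac:(lra) eps He) as [d [Hd H]].
  exists d; split; auto. intros y Hy. destruct (H y Hy) as [Hy1 Hy2].
  rewrite !Hh by lra. exact Hy2.
Qed.

Lemma convex_sub A B a b g : convex_on A B g -> A <= a -> b <= B -> convex_on a b g.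
Proof. intros Hc H1 H2 u v t Hu Hv Ht. apply Hc; lra. Qed.

Lemma RInt_plusR f g a b : ex_RInt f a b -> ex_RInt g a b ->
  RInt (fun x => f x + g x) a b = RInt f a b + RInt g a b.
Proof. intros. apply (RInt_plus f g a b); assumption. Qed.

Lemma ex_RInt_plusR f g a b : ex_RInt f a b -> ex_RInt g a b -> ex_RInt (fun x => f x + g x) a b.
Proof. intros. apply (ex_RInt_plus f g a b); assumption. Qed.

Lemma RInt_scalR f a b k : ex_RInt f a b -> RInt (fun x => k * f x) a b = k * RInt f a b.
Proof. intros. apply (RInt_scal f a b k); assumption. Qed.

Lemma ex_RInt_scalR f a b k : ex_RInt f a b -> ex_RInt (fun x => k * f x) a b.
Proof. intros. apply (ex_RInt_scal f a b k); assumption. Qed.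

Lemma RInt_constR a b c : RInt (fun _ => c) a b = (b - a) * c.
Proof. rewrite RInt_const. reflexivity. Qed.

Lemma HHup a b g : a < b -> convex_on a b g -> RInt g a b <= (b - a) * (g a + g b) / 2.
Proof.
  intros Hab Hc.
  set (ch := fun x => ((b - x) * g a + (x - a) * g b) / (b - a)).
  set (F := fun x => (- (b - x) ^ 2 * g a + (x - a) ^ 2 * g b) / (2 * (b - a))).
  assert (HI : is_RInt ch a b (minus (F b) (F a))).
  { apply (is_RInt_derive F ch).
    - intros x _. unfold F, ch. auto_derive; [lra|]. field. lra.
    - intros x _. unfold ch. apply continuity_pt_filterlim.
      apply derivable_continuous_pt. unfold ch. reg. }
  assert (Hv : RInt ch a b = (b - a) * (g a + g b) / 2).
  { rewrite (is_RInt_unique _ _ _ _ HI). unfold minus, plus, opp; simpl. unfold F. field. lra. }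
  rewrite <- Hv. apply RInt_le; [lra| apply convex_ex_RInt; assumption | eexists; exact HI |].
  intros x Hx. unfold ch. pose proof (conv3 a b g a x b Hc ltac:(lra) ltac:(lra) ltac:(lra) ltac:(lra) Hab).
  apply (Rmult_le_reg_r (b - a)); [lra|]. unfold Rdiv. rewrite Rmult_assoc, Rinv_l by lra. lra.
Qed.

Lemma HHlow a b g : a < b -> convex_on a b g -> (b - a) * g ((a + b) / 2) <= RInt g a b.
Proof.
  intros Hab Hc.
  set (k := fun x => g (a + b - x)).
  assert (Eg : ex_RInt g a b) by (apply convex_ex_RInt; assumption).
  assert (Ek : ex_RInt k a b) by (apply convex_ex_RInt; [apply refl_convex; assumption|assumption]).
  assert (Hk : RInt k a b = RInt g a b).
  { assert (Egba : ex_RInt g (-1 * a + (a + b)) (-1 * b + (a + b))).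
    { replace (-1 * a + (a + b)) with b by ring. replace (-1 * b + (a + b)) with a by ring.
      apply ex_RInt_swap; exact Eg. }
    pose proof (RInt_comp_lin g (-1) (a + b) a b Egba) as E.
    replace (-1 * a + (a + b)) with b in E by ring. replace (-1 * b + (a + b)) with a in E by ring.
    rewrite (RInt_ext _ (fun y => -1 * k y)) in E.
    2:{ intros x _. unfold k. replace (-1 * x + (a + b)) with (a + b - x) by ring. reflexivity. }
    rewrite RInt_scalR in E by exact Ek.
    rewrite <- (opp_RInt_swap g) in E by exact Eg. unfold opp in E; simpl in E. lra. }
  assert (Hp : RInt (fun x => g x + k x) a b = 2 * RInt g a b).
  { rewrite RInt_plusR by assumption. rewrite Hk. lra. }
  assert (Hle : RInt (fun _ => 2 * g ((a + b) / 2)) a b <= RInt (fun x => g x + k x) a b).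
  { apply RInt_le; [lra| apply ex_RInt_const | apply ex_RInt_plusR; assumption |].
    intros x Hx. unfold k.
    pose proof (Hc x (a + b - x) (1/2) ltac:(lra) ltac:(lra) ltac:(lra)).
    replace (1 / 2 * x + (1 - 1 / 2) * (a + b - x)) with ((a + b) / 2) in H by field. lra. }
  rewrite RInt_constR, Hp in Hle. lra.
Qed.

Lemma Rint_RInt g a b : ex_RInt g a b -> Rint g a b = RInt g a b.
Proof.
  intros H. pose proof (ex_RInt_Reals_0 _ _ _ H) as pr.
  unfold Rint.
  destruct (epsilon_spec (inhabits 0) (fun l => exists pr : Riemann_integrable g a b, RiemannInt pr = l)
     (ex_intro _ (RiemannInt pr) (ex_intro _ pr eq_refl))) as [pr' Hpr'].
  rewrite <- Hpr'. symmetry. apply RInt_Reals.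
Qed.

Lemma HH01 g : convex_on 0 1 g -> ex_RInt g 0 1 /\
  (g (1/4) + g (3/4)) / 2 <= RInt g 0 1 /\ RInt g 0 1 <= (g 0 + 2 * g (1/2) + g 1) / 4.
Proof.
  intros Hc.
  assert (C1 : convex_on 0 (1/2) g) by (apply (convex_sub 0 1); lra || assumption).
  assert (C2 : convex_on (1/2) 1 g) by (apply (convex_sub 0 1); lra || assumption).
  assert (E1 := convex_ex_RInt 0 (1/2) g C1 ltac:(lra)).
  assert (E2 := convex_ex_RInt (1/2) 1 g C2 ltac:(lra)).
  assert (Ch : RInt g 0 (1/2) + RInt g (1/2) 1 = RInt g 0 1) by (apply (RInt_Chasles g); assumption).
  pose proof (HHlow 0 (1/2) g ltac:(lra) C1) as L1.
  pose proof (HHlow (1/2) 1 g ltac:(lra) C2) as L2.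
  pose proof (HHup 0 (1/2) g ltac:(lra) C1) as U1.
  pose proof (HHup (1/2) 1 g ltac:(lra) C2) as U2.
  replace ((0 + 1/2) / 2) with (1/4) in L1 by field.
  replace ((1/2 + 1) / 2) with (3/4) in L2 by field.
  split; [apply convex_ex_RInt; [assumption|lra]|]. lra.
Qed.

Theorem corollary1 (f : R -> R -> R) :
  convex_on_coordinates 0 1 0 1 f ->
  (1/4) * Rint (fun x => f x (1/4) + f x (3/4)) 0 1
    + (1/4) * Rint (fun y => f (1/4) y + f (3/4) y) 0 1
  <= Rint (fun y => Rint (fun x => f x y) 0 1) 0 1
  /\
  Rint (fun y => Rint (fun x => f x y) 0 1) 0 1
  <= (1/8) * Rint (fun x => f x 0 + f x 1) 0 1
     + (1/8) * Rint (fun y => f 0 y + f 1 y) 0 1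
     + (1/4) * Rint (fun x => f x (1/2)) 0 1
     + (1/4) * Rint (fun y => f (1/2) y) 0 1.
Proof.
  intros [Hrow Hcol].
  assert (Er : forall y, 0 <= y <= 1 -> ex_RInt (fun x => f x y) 0 1)
    by (intros y Hy; apply convex_ex_RInt; [apply Hrow; exact Hy|lra]).
  assert (Ec : forall x, 0 <= x <= 1 -> ex_RInt (fun y => f x y) 0 1)
    by (intros x Hx; apply convex_ex_RInt; [apply Hcol; exact Hx|lra]).
  set (F := fun y => RInt (fun x => f x y) 0 1).
  assert (FC : convex_on 0 1 F).
  { intros u v t Hu Hv Ht. unfold F.
    rewrite <- (RInt_scalR (fun x => f x u) 0 1 t) by auto.
    rewrite <- (RInt_scalR (fun x => f x v) 0 1 (1 - t)) by auto.
    rewrite <- RInt_plusR by (apply ex_RInt_scalR; auto).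
    apply RInt_le; [lra| apply Er; nra | apply ex_RInt_plusR; apply ex_RInt_scalR; auto |].
    intros x Hx. apply (Hcol x ltac:(lra)); assumption. }
  destruct (HH01 F FC) as [EF [FL FU]].
  assert (Hout : Rint (fun y => Rint (fun x => f x y) 0 1) 0 1 = RInt F 0 1).
  { assert (Eq : forall y, Rmin 0 1 < y < Rmax 0 1 -> F y = Rint (fun x => f x y) 0 1).
    { intros y Hy. rewrite Rmin_left, Rmax_right in Hy by lra. unfold F. symmetry. apply Rint_RInt. apply Er; lra. }
    rewrite Rint_RInt by (apply (ex_RInt_ext F); assumption).
    symmetry. apply RInt_ext. exact Eq. }
  rewrite Hout.
  assert (HF : forall y, 0 <= y <= 1 -> Rint (fun x => f x y) 0 1 = F y)
    by (intros y Hy; apply Rint_RInt; auto).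
  assert (Row : forall y, 0 <= y <= 1 -> (f (1/4) y + f (3/4) y) / 2 <= F y /\
     F y <= (f 0 y + 2 * f (1/2) y + f 1 y) / 4).
  { intros y Hy. destruct (HH01 _ (Hrow y Hy)) as [_ [A1 A2]]. split; assumption. }
  assert (R1 : Rint (fun x => f x (1/4) + f x (3/4)) 0 1 = F (1/4) + F (3/4)).
  { rewrite Rint_RInt by (apply ex_RInt_plusR; apply Er; lra). apply RInt_plusR; apply Er; lra. }
  assert (R3 : Rint (fun x => f x 0 + f x 1) 0 1 = F 0 + F 1).
  { rewrite Rint_RInt by (apply ex_RInt_plusR; apply Er; lra). apply RInt_plusR; apply Er; lra. }
  assert (R5 : Rint (fun x => f x (1/2)) 0 1 = F (1/2)) by (apply HF; lra).
  assert (E14 : ex_RInt (fun y => f (1/4) y + f (3/4) y) 0 1) by (apply ex_RInt_plusR; apply Ec; lra).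
  assert (E01 : ex_RInt (fun y => f 0 y + f 1 y) 0 1) by (apply ex_RInt_plusR; apply Ec; lra).
  assert (E12 : ex_RInt (fun y => f (1/2) y) 0 1) by (apply Ec; lra).
  assert (R2 : Rint (fun y => f (1/4) y + f (3/4) y) 0 1 <= 2 * RInt F 0 1).
  { rewrite Rint_RInt by exact E14. rewrite <- RInt_scalR by exact EF.
    apply RInt_le; [lra|exact E14|apply ex_RInt_scalR; exact EF|].
    intros y Hy. destruct (Row y ltac:(lra)). lra. }
  assert (R4 : 4 * RInt F 0 1 <= Rint (fun y => f 0 y + f 1 y) 0 1 + 2 * Rint (fun y => f (1/2) y) 0 1).
  { rewrite !Rint_RInt by assumption. rewrite <- RInt_scalR by exact EF.
    rewrite <- (RInt_scalR _ _ _ 2) by exact E12.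
    rewrite <- RInt_plusR by (try apply ex_RInt_scalR; assumption).
    apply RInt_le; [lra|apply ex_RInt_scalR; exact EF|apply ex_RInt_plusR; [exact E01|apply ex_RInt_scalR; exact E12]|].
    intros y Hy. destruct (Row y ltac:(lra)). lra. }
  rewrite R1, R3, R5. split; lra.
Qed.
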